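(* For every integer $n\geq 1$, $$c_n(231,321 : 231)=c_n(312,321 : 312)=F_n,$$ where $F_n$ is the $n$-th Fibonacci number, indexed by $F_1=1$, $F_2=2$, $F_n=F_{n-1}+F_{n-2}$ for $n\ge 3$.
   Context: $S_n$ is the symmetric group on $[n]=\{1,\dots,n\}$, and a permutation $\pi\in S_n$ is written in one-line notation $\pi=\pi_1\pi_2\cdots\pi_n$ with $\pi_i=\pi(i)$. For $\tau\in S_k$, $k\le n$, $\pi$ contains $\tau$ if there are indices $i_1<\dots<i_k$ with $\pi_{i_s}>\pi_{i_t}$ iff $\tau_s>\tau_t$ for all $1\le s<t\le k$; otherwise $\pi$ avoids $\tau$. $\pi^2$ denotes the composition $\pi\circ\pi$. For patterns $\sigma_1,\sigma_2,\rho$, $c_n(\sigma_1,\sigma_2 : \rho)$ denotes the number of permutations $\pi\in S_n$ such that $\pi$ avoids both $\sigma_1$ and $\sigma_2$ and $\pi^2$ avoids $\rho$. *)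

(* Defs.v *)
From mathcomp Require Import all_boot all_order all_fingroup.
Set Implicit Arguments. Unset Strict Implicit. Unset Printing Implicit Defensive.

(* A permutation pi of {1..n} is represented as s : 'S_n = {perm 'I_n}
   (values shifted by one: pi_(i+1) = s i + 1; this shift preserves order
   comparisons, so pattern containment is unaffected).
   A pattern tau in S_k is given in one-line notation as a sequence of
   naturals [:: tau_1; ...; tau_k]. *)

Definition contains (n : nat) (s : 'S_n) (tau : seq nat) : bool :=
  [exists f : {ffun 'I_(size tau) -> 'I_n},
    [forall a : 'I_(size tau), forall b : 'I_(size tau), (a < b)%N ==>
       ((f a < f b)%N &&
        ((s (f b) < s (f a))%N == (nth 0 tau b < nth 0 tau a)%N))]].

Definition avoids (n : nat) (s : 'S_n) (tau : seq nat) : bool :=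
  ~~ contains s tau.

Definition psquare (n : nat) (s : 'S_n) : 'S_n := (s * s)%g.

Definition c_count (n : nat) (sigma1 sigma2 rho : seq nat) : nat :=
  #|[set s : 'S_n | [&& avoids s sigma1, avoids s sigma2 & avoids (psquare s) rho]]|.

Fixpoint fibF (n : nat) : nat :=
  match n with
  | 0 => 1
  | 1 => 1
  | S ((S m) as p) => fibF p + fibF m
  end.

(* Main.v *)
Require Import Defs.
From mathcomp Require Import all_boot all_order all_fingroup.
From mathcomp Require Import zify.
Set Implicit Arguments. Unset Strict Implicit. Unset Printing Implicit Defensive.

Lemma contains3 n (s : 'S_n) x y z :
  contains s [:: x; y; z] <->
  exists a b c : 'I_n, [/\ a < b, b < c,
     (s b < s a) = (y < x), (s c < s a) = (z < x) & (s c < s b) = (z < y)].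
Proof.
split.
- move/existsP=> [f /forallP H].
  have H01 := implyP (forallP (H (Ordinal (isT : 0 < 3))) (Ordinal (isT : 1 < 3))) isT.
  have H02 := implyP (forallP (H (Ordinal (isT : 0 < 3))) (Ordinal (isT : 2 < 3))) isT.
  have H12 := implyP (forallP (H (Ordinal (isT : 1 < 3))) (Ordinal (isT : 2 < 3))) isT.
  case/andP: H01 => A1 /eqP B1; case/andP: H02 => A2 /eqP B2; case/andP: H12 => A3 /eqP B3.
  by exists (f (Ordinal (isT : 0 < 3))), (f (Ordinal (isT : 1 < 3))), (f (Ordinal (isT : 2 < 3))).
- move=> [a [b [c [Hab Hbc E1 E2 E3]]]].
  apply/existsP; exists [ffun i : 'I_3 => if val i == 0 then a else if val i == 1 then b else c].
  apply/forallP => i; apply/forallP => j; apply/implyP.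
  case: i => [[|[|[|i]]] Hi] //; case: j => [[|[|[|j]]] Hj] //= _; rewrite !ffunE /=.
  + by rewrite Hab E1 eqxx.
  + by rewrite (ltn_trans Hab Hbc) E2 eqxx.
  + by rewrite Hbc E3 eqxx.
Qed.

Definition valid n (s : 'S_n) := forall i : 'I_n, s i <= i.+1 /\ i <= (s i).+1.

Lemma valid_inv n (s : 'S_n) : valid s -> valid (s^-1)%g.
Proof.
move=> V x; have := V ((s^-1)%g x); rewrite permKV => -[]; lia.
Qed.

Lemma invol_step n (s : 'S_n) : valid s -> forall k (i j : 'I_n),
  nat_of_ord i = k -> nat_of_ord (s i) = k.+1 -> nat_of_ord j = k.+1 -> nat_of_ord (s j) = k.
Proof.
move=> V; elim=> [|k IH] i j Hi Hsi Hj.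
- set p := (s^-1)%g i.
  have Hp : s p = i by rewrite permKV.
  have [A B] := V p; rewrite Hp in A B.
  have Hpi : nat_of_ord p <> nat_of_ord i by move=> /val_inj E; move: Hsi; rewrite -E Hp Hi.
  have E : p = j by apply: val_inj => /=; lia.
  by rewrite -E Hp Hi.
- set p := (s^-1)%g i.
  have Hp : s p = i by rewrite permKV.
  have [A B] := V p; rewrite Hp in A B.
  have Hpi : nat_of_ord p <> nat_of_ord i by move=> /val_inj E; move: Hsi; rewrite -E Hp Hi; lia.
  have [Hlt|Hge] := ltnP (nat_of_ord p) (nat_of_ord i).
  + have Hpk : nat_of_ord p = k by lia.
    have Hik : nat_of_ord (s p) = k.+1 by rewrite Hp Hi.
    have := IH p i Hpk Hik Hi; lia.
  + have E : p = j by apply: val_inj => /=; lia.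
    by rewrite -E Hp Hi.
Qed.

Lemma invol n (s : 'S_n) : valid s -> forall i, s (s i) = i.
Proof.
move=> V i; have [A B] := V i.
have [E|[E|E]] : nat_of_ord (s i) = i \/ nat_of_ord (s i) = i.+1 \/ (nat_of_ord (s i)).+1 = i by lia.
- have E' : s i = i by apply: val_inj.
  by rewrite !E'.
- by apply: val_inj => /=; apply: (invol_step V (erefl _) E).
- have V' := valid_inv V.
  have H1 : nat_of_ord ((s^-1)%g (s i)) = (s i).+1 by rewrite permK.
  have := invol_step V' (erefl _) H1 (esym E) => H2.
  have H3 : (s^-1)%g i = s i by apply: val_inj.
  by rewrite -H3 permKV.
Qed.

Lemma valid_inversion n (s : 'S_n) (a b : 'I_n) : valid s -> a < b -> s b < s a ->
  nat_of_ord b = a.+1 /\ nat_of_ord (s a) = b /\ nat_of_ord (s b) = a.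
Proof. move=> V; have := V a; have := V b; lia. Qed.

Lemma valid_avoid n (s : 'S_n) : valid s ->
  [/\ avoids s [:: 2; 3; 1], avoids s [:: 3; 2; 1] & avoids s [:: 3; 1; 2]].
Proof.
move=> V; split; apply/negP; move/contains3 => [a [b [c [Hab Hbc E1 E2 E3]]]];
  move: E1 E2 E3 => /= E1 E2 E3.
- have := valid_inversion V (ltn_trans Hab Hbc) E2.
  have := valid_inversion V Hbc E3. lia.
- have := valid_inversion V Hab E1.
  have := valid_inversion V Hbc E3. lia.
- have := valid_inversion V (ltn_trans Hab Hbc) E2.
  have := valid_inversion V Hab E1. lia.
Qed.

Lemma valid_sq_avoid n (s : 'S_n) : valid s ->
  avoids (psquare s) [:: 2; 3; 1] /\ avoids (psquare s) [:: 3; 1; 2].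
Proof.
move=> V; have Hsq : forall x, psquare s x = x by move=> x; rewrite /psquare permM invol.
split; apply/negP; move/contains3 => [a [b [c [Hab Hbc E1 E2 E3]]]];
  move: E1 E2 E3; rewrite !Hsq /= => E1 E2 E3.
- by move: E2; rewrite ltnNge (ltnW (ltn_trans Hab Hbc)).
- by move: E1; rewrite ltnNge (ltnW Hab).
Qed.

Lemma card_prefix n k : k <= n -> #|[set v : 'I_n | v < k]| = k.
Proof.
move=> Hk.
have -> : [set v : 'I_n | v < k] = [set widen_ord Hk x | x in 'I_k].
  apply/setP => v; rewrite inE; apply/idP/imsetP.
  - by move=> Hv; exists (Ordinal Hv) => //; apply: val_inj.
  - by move=> [x _ ->] /=.
rewrite card_imset ?card_ord //.
by move=> x y /(congr1 val) /= /val_inj.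
Qed.

Lemma PH n (t : 'S_n) (A B : {set 'I_n}) : #|B| < #|A| -> exists2 x, x \in A & t x \notin B.
Proof.
move=> H; apply/exists_inP; rewrite -negb_forall_in; apply/negP => /forall_inP Hall.
have : t @: A \subset B by apply/subsetP => y /imsetP [x Hx ->]; apply: Hall.
move/subset_leq_card; rewrite card_imset; last exact: perm_inj.
by rewrite leqNgt H.
Qed.

Definition F1 n (t : 'S_n) := forall a b c : 'I_n, a < b -> b < c -> ~ (t c < t a /\ t c < t b).
Definition LB n (t : 'S_n) := forall p : 'I_n, p <= (t p).+1.

Lemma F1_LB n (t : 'S_n) : F1 t -> LB t.
Proof.
move=> F c; rewrite leqNgt; apply/negP => Hc.
have Htc : t c <= n by apply: ltnW.
have Hcn : c <= n by apply: ltnW.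
have [j1 Hj1 Hnj1] := @PH n t [set j : 'I_n | j < c] [set v : 'I_n | v < t c]
  ltac:(rewrite !card_prefix //; lia).
move: Hj1 Hnj1; rewrite !inE -leqNgt => Hj1 Hnj1.
have Hne1 : nat_of_ord (t j1) <> t c by move=> /val_inj /perm_inj E; move: Hj1; rewrite E ltnn.
have [j2 Hj2 Hnj2] := @PH n t [set j : 'I_n | j < c] (t j1 |: [set v : 'I_n | v < t c])
  ltac:(rewrite cardsU1 !card_prefix //; case: (_ \notin _); lia).
move: Hj2 Hnj2; rewrite !inE negb_or -leqNgt => Hj2 /andP [Hnj2a Hnj2].
have Hne2 : nat_of_ord (t j2) <> t c by move=> /val_inj /perm_inj E; move: Hj2; rewrite E ltnn.
have Hj12 : nat_of_ord j1 <> j2 by move=> /val_inj E; move: Hnj2a; rewrite E eqxx.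
have [H12|H21] : j1 < j2 \/ j2 < j1 by lia.
- by apply: (F j1 j2 c H12 Hj2); lia.
- by apply: (F j2 j1 c H21 Hj1); lia.
Qed.

Lemma Qlem n (t : 'S_n) (i : 'I_n) : LB t -> i <= t i -> forall p : 'I_n, p < i -> t p < i.
Proof.
move=> L Hi p Hp; rewrite ltnNge; apply/negP => Htp.
have Hin : i <= n by apply: ltnW.
have Hc : #|[set q : 'I_n | q < i] :\ p| < #|[set v : 'I_n | v < i]|.
  move: (cardsD1 p [set q : 'I_n | q < i]); rewrite inE Hp !card_prefix //=.
  by move=> E; rewrite [X in _ < X]E add1n ltnSn.
have [v Hv Hq] := @PH n (t^-1)%g [set v : 'I_n | v < i] ([set q : 'I_n | q < i] :\ p) Hc.
move: Hv Hq; rewrite !inE negb_and negbK -leqNgt => Hv /orP [/eqP E|Hq].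
- by move: Htp; rewrite -E permKV leqNgt Hv.
- have := L ((t^-1)%g v); rewrite permKV => Hl.
  have E : (t^-1)%g v = i by apply: val_inj => /=; lia.
  have : nat_of_ord (t i) = v by rewrite -E permKV.
  lia.
Qed.

Lemma SL n (t : 'S_n) (i : 'I_n) : LB t -> i.+2 <= t i ->
  exists j1 j2 : 'I_n, [/\ nat_of_ord j1 = i.+1, nat_of_ord j2 = i.+2,
     nat_of_ord (t j1) = i, nat_of_ord (t j2) = i.+1 & i < t (t i) < t i].
Proof.
move=> L Hm.
have Q := Qlem L (leq_trans (leqnSn _) (leq_trans (leqnSn _) Hm)).
set p1 := (t^-1)%g i.
have Hp1 : t p1 = i by rewrite permKV.
have Hp1v : nat_of_ord p1 = i.+1.
  have := L p1; rewrite Hp1 => A.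
  have B : ~ p1 < i by move=> /Q; rewrite Hp1 ltnn.
  have C : nat_of_ord p1 <> i by move=> /val_inj E; move: Hm; rewrite -E Hp1 E; lia.
  lia.
have Hw : i.+1 < n by have := ltn_ord (t i); lia.
set w := Ordinal Hw.
set p2 := (t^-1)%g w.
have Hp2 : t p2 = w by rewrite permKV.
have Hp2v : nat_of_ord p2 = i.+2.
  have := L p2; rewrite Hp2 /= => A.
  have B : ~ p2 < i by move=> /Q; rewrite Hp2 /=; lia.
  have C : nat_of_ord p2 <> i by move=> /val_inj E; move: Hm; rewrite -E Hp2 /=; lia.
  have D : nat_of_ord p2 <> p1 by move=> /val_inj E; move: Hp2; rewrite E Hp1 => /(congr1 val) /=; lia.
  lia.
set m := t i.
have Hmn : m <= n by apply: ltnW.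
have Him : i < m by rewrite /m; lia.
have Hc : #|[set q : 'I_n | q < m] :\ i| < #|[set v : 'I_n | v < m]|.
  move: (cardsD1 i [set q : 'I_n | q < m]); rewrite inE Him !card_prefix //=.
  by move=> E; rewrite [X in _ < X]E add1n ltnSn.
have [v Hv Hq] := @PH n (t^-1)%g [set v : 'I_n | v < m] ([set q : 'I_n | q < m] :\ i) Hc.
move: Hv Hq; rewrite !inE negb_and negbK -leqNgt => Hv /orP [/eqP E|Hq].
- by move: Hv; rewrite /m -E permKV ltnn.
- have := L ((t^-1)%g v); rewrite permKV => Hl.
  have E : (t^-1)%g v = m by apply: val_inj => /=; lia.
  have Htm : t m = v by rewrite -E permKV.
  exists p1, p2; split => //; rewrite ?Hp1 ?Hp2 //= Htm.
  have := L m; rewrite Htm; move: Hv Hm; rewrite /m; lia.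
Qed.

Lemma char1 n (s : 'S_n) :
  [&& avoids s [:: 2; 3; 1], avoids s [:: 3; 2; 1] & avoids (psquare s) [:: 2; 3; 1]]
  <-> valid s.
Proof.
split; last first.
  move=> V; have [A1 A2 _] := valid_avoid V; have [A3 _] := valid_sq_avoid V.
  by rewrite A1 A2 A3.
case/and3P => /negP A1 /negP A2 /negP A3.
have F : F1 s.
  move=> a b c Hab Hbc [H1 H2].
  have [Hs|Hs] : s a < s b \/ s b < s a.
    have : nat_of_ord (s a) <> s b by move=> /val_inj /perm_inj E; move: Hab; rewrite E ltnn.
    lia.
  - apply: A1; apply/contains3; exists a, b, c; split => //=; lia.
  - apply: A2; apply/contains3; exists a, b, c; split => //=; lia.
have L := F1_LB F.
move=> i; split; last exact: L.
rewrite leqNgt; apply/negP => Hi.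
have [j1 [j2 [E1 E2 E3 E4 /andP [E5 E6]]]] := SL L Hi.
have Hsj1 : s j1 = i by apply: val_inj.
have Hsj2 : s j2 = j1 by apply: val_inj => /=; rewrite E4 E1.
apply: A3; apply/contains3; exists i, j1, j2.
rewrite /psquare !permM Hsj2 Hsj1 E1 E2; split => //=; lia.
Qed.

Lemma char2 n (s : 'S_n) :
  [&& avoids s [:: 3; 1; 2], avoids s [:: 3; 2; 1] & avoids (psquare s) [:: 3; 1; 2]]
  <-> valid s.
Proof.
split; last first.
  move=> V; have [_ A2 A1] := valid_avoid V; have [_ A3] := valid_sq_avoid V.
  by rewrite A1 A2 A3.
case/and3P => /negP A1 /negP A2 /negP A3.
set t := (s^-1)%g.
have F : F1 t.
  move=> a b c Hab Hbc [H1 H2].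
  have Ea : s (t a) = a by rewrite permKV.
  have Eb : s (t b) = b by rewrite permKV.
  have Ec : s (t c) = c by rewrite permKV.
  have [Hs|Hs] : t a < t b \/ t b < t a.
    have : nat_of_ord (t a) <> t b by move=> /val_inj E; move: Hab; rewrite -Ea E Eb ltnn.
    lia.
  - apply: A1; apply/contains3; exists (t c), (t a), (t b); rewrite Ea Eb Ec; split => //=; lia.
  - apply: A2; apply/contains3; exists (t c), (t b), (t a); rewrite Ea Eb Ec; split => //=; lia.
have L := F1_LB F.
move=> i; split.
  by have := L (s i); rewrite /t permK.
rewrite leqNgt; apply/negP => Hi.
have Hti : (s i).+2 <= t (s i) by rewrite /t permK.
have [j1 [j2 [E1 E2 E3 E4 /andP [E5 E6]]]] := SL L Hti.
move: E5 E6; rewrite {1 2 4}/t permK => E5 E6.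
have Hsj1 : s (s i) = j1 by apply: (@perm_inj _ t); rewrite /t permK; apply: val_inj.
have Hsj2 : s j1 = j2.
  apply: (@perm_inj _ t); rewrite /t permK; apply: val_inj => /=; rewrite E4 E1 //.
have Hst : s (t i) = i by rewrite /t permKV.
apply: A3; apply/contains3; exists (s i), (t i), i.
rewrite /psquare !permM Hsj1 Hsj2 Hst; split => //=; lia.
Qed.

Fixpoint L (n : nat) : seq (seq nat) :=
  match n with
  | 0 => [:: [::]]
  | 1 => [:: [:: 0]]
  | S ((S m) as p) => [seq rcons t p | t <- L p] ++ [seq t ++ [:: p; m] | t <- L m]
  end.

Lemma L_size n : size (L n) = fibF n /\ size (L n.+1) = fibF n.+1.
Proof.
elim: n => [|n [IH1 IH2]]; first by split.
split; first exact: IH2.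
by rewrite /= size_cat !size_map IH1 IH2 addnC.
Qed.

Definition Pb n (t : seq nat) := size t = n /\ forall k, k < n ->
  [/\ nth 0 t k <= k.+1, k <= (nth 0 t k).+1, nth 0 t k < n & nth 0 t (nth 0 t k) = k].

Lemma Pb_rcons m t : Pb m.+1 t -> Pb m.+2 (rcons t m.+1).
Proof.
move=> [St H]; split; first by rewrite size_rcons St.
move=> k Hk; rewrite !nth_rcons St.
have [Hk1|Hk1] := ltnP k m.+1.
- have [A B C D] := H k Hk1; rewrite C D; split => //; lia.
- have -> : k = m.+1 by lia.
  by rewrite eqxx ltnn eqxx.
Qed.

Lemma Pb_cat2 m t : Pb m t -> Pb m.+2 (t ++ [:: m.+1; m]).
Proof.
move=> [St H]; split; first by rewrite size_cat St addn2.
move=> k Hk; rewrite !nth_cat St.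
have [Hk1|Hk1] := ltnP k m.
- have [A B C D] := H k Hk1; rewrite C D; split => //; lia.
- have [->|->] : k = m \/ k = m.+1 by lia.
  + by rewrite subnn /= (ltnNge m.+1 m) leqnSn /= subSnn /=; split => //; lia.
  + by rewrite subSnn /= ltnn subnn /=; split => //; lia.
Qed.

Lemma Pb_last m t : Pb m.+2 t ->
  (exists t', Pb m.+1 t' /\ t = rcons t' m.+1) \/ (exists t', Pb m t' /\ t = t' ++ [:: m.+1; m]).
Proof.
move=> [St H].
have [A B C D] := H m.+1 (ltnSn _).
have [E|E] : nth 0 t m.+1 = m.+1 \/ nth 0 t m.+1 = m by lia.
- left; exists (take m.+1 t).
  have Ht : t = rcons (take m.+1 t) m.+1.
    by rewrite -{1}(take_size t) St (take_nth 0) ?St // E.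
  split => //; rewrite /Pb; split; first by rewrite size_takel // St.
  move=> k Hk; rewrite (nth_take _ Hk).
  have [A' B' C' D'] := H k (ltnW Hk).
  have Hx : nth 0 t k < m.+1.
    have : nth 0 t k <> m.+1 by move=> E'; move: D'; rewrite E' E; lia.
    lia.
  by rewrite (nth_take _ Hx); split => //; lia.
- right; exists (take m t).
  have Em : nth 0 t m = m.+1 by move: D; rewrite E.
  have Ht : t = take m t ++ [:: m.+1; m].
    rewrite -{1}(take_size t) St (take_nth 0) ?St // (take_nth 0) ?St // Em E.
    by rewrite -!cats1 -catA.
  split => //; rewrite /Pb; split; first by rewrite size_takel // St; lia.
  move=> k Hk; rewrite (nth_take _ Hk).
  have [A' B' C' D'] := H k (ltn_trans Hk (ltnW (ltnSn _))).
  have Hx : nth 0 t k < m.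
    have : nth 0 t k <> m by move=> E'; move: D'; rewrite E' Em; lia.
    have : nth 0 t k <> m.+1 by move=> E'; move: D'; rewrite E' E; lia.
    lia.
  by rewrite (nth_take _ Hx); split => //; lia.
Qed.

Lemma L_mem n : (forall t, t \in L n <-> Pb n t) /\ (forall t, t \in L n.+1 <-> Pb n.+1 t).
Proof.
elim: n => [|n [IH1 IH2]].
  split => t; split.
  - by rewrite inE => /eqP ->; split => // k.
  - by move=> [/size0nil -> _].
  - by rewrite inE => /eqP ->; split => // -[|k] //.
  - move=> [St H]; have [_ _ C _] := H 0 isT; clear H.
    case: t St C => [|x [|y t]] //= _; rewrite ltnS leqn0 => /eqP ->.
    by rewrite inE.
split; first exact: IH2.
move=> t; rewrite [L n.+2]/= mem_cat; split.
- case/orP => /mapP [t' Ht' ->].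
  + by apply: Pb_rcons; apply/IH2.
  + by apply: Pb_cat2; apply/IH1.
- case/Pb_last => [[t' [Ht' ->]]|[t' [Ht' ->]]]; apply/orP.
  + by left; apply: map_f; apply/IH2.
  + by right; apply: map_f; apply/IH1.
Qed.

Lemma Pb_size n t : Pb n t -> size t = n.
Proof. by case. Qed.

Lemma L_uniq n : uniq (L n) /\ uniq (L n.+1).
Proof.
elim: n => [|n [IH1 IH2]]; first by split.
split; first exact: IH2.
rewrite [L n.+2]/= cat_uniq !map_inj_uniq // ?IH1 ?IH2 ?andbT /=; last first.
- exact: rcons_injl.
- move=> x y /= E.
  have Sxy : size x = size y by have := congr1 size E; rewrite !size_cat; lia.
  by have := congr1 (take (size x)) E; rewrite take_size_cat // Sxy take_size_cat.
- apply/hasPn => x /mapP [t' _ ->]; apply/mapP => -[t'' _ E].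
  by have := congr1 (last 0) E; rewrite last_cat last_rcons /=; lia.
Qed.

Definition validb n (s : 'S_n) := [forall i, (s i <= i.+1) && (i <= (s i).+1)].

Lemma validP n (s : 'S_n) : reflect (valid s) (validb s).
Proof.
apply: (iffP forallP) => H i.
- by have /andP [A B] := H i.
- by have [A B] := H i; rewrite A B.
Qed.

Definition phi n (s : 'S_n) : seq nat := [seq nat_of_ord (s i) | i <- enum 'I_n].

Lemma nth_phi n (s : 'S_n) k (Hk : k < n) : nth 0 (phi s) k = s (Ordinal Hk).
Proof.
rewrite /phi (nth_map (Ordinal Hk)) ?size_enum_ord //.
have -> // : nth (Ordinal Hk) (enum 'I_n) k = Ordinal Hk.
by apply: val_inj; rewrite /= nth_enum_ord.
Qed.

Lemma size_phi n (s : 'S_n) : size (phi s) = n.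
Proof. by rewrite size_map size_enum_ord. Qed.

Lemma phi_inj n : injective (@phi n).
Proof.
move=> s s' E; apply/permP => i; apply: val_inj.
have := congr1 (nth 0 ^~ (nat_of_ord i)) E; rewrite /= !(nth_phi _ (ltn_ord i)).
by have -> : Ordinal (ltn_ord i) = i by apply: val_inj.
Qed.

Lemma phi_Pb n (s : 'S_n) : valid s -> Pb n (phi s).
Proof.
move=> V; split; first exact: size_phi.
move=> k Hk; rewrite (nth_phi _ Hk).
have [A B] := V (Ordinal Hk).
rewrite (nth_phi _ (ltn_ord _)).
have -> : Ordinal (ltn_ord (s (Ordinal Hk))) = s (Ordinal Hk) by apply: val_inj.
by rewrite invol.
Qed.

Lemma Pb_phi n t : Pb n t -> exists s : 'S_n, valid s /\ phi s = t.
Proof.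
move=> [St H].
pose g := fun i : 'I_n => insubd i (nth 0 t i).
have Eg : forall i : 'I_n, nat_of_ord (g i) = nth 0 t i.
  by move=> i; rewrite /g val_insubd; have [_ _ -> _] := H i (ltn_ord i).
have gI : injective g.
  move=> i j E; apply: val_inj => /=.
  have [_ _ _ Di] := H i (ltn_ord i); have [_ _ _ Dj] := H j (ltn_ord j).
  by rewrite -Di -Dj -!Eg E.
exists (perm gI); split.
- by move=> i; rewrite permE Eg; have [A B _ _] := H i (ltn_ord i).
- apply: (@eq_from_nth _ 0); first by rewrite size_phi St.
  move=> k; rewrite size_phi => Hk.
  by rewrite (nth_phi _ Hk) permE Eg.
Qed.

Lemma count_valid n : #|[set s : 'S_n | validb s]| = fibF n.
Proof.
rewrite cardE -(size_map (@phi n)).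
have P : perm_eq [seq phi s | s <- enum [set s : 'S_n | validb s]] (L n).
  apply: uniq_perm.
  - by rewrite map_inj_uniq ?enum_uniq //; apply: phi_inj.
  - exact: (proj1 (L_uniq n)).
  move=> t; apply/idP/idP.
  - move=> /mapP [s]; rewrite mem_enum inE => /validP V ->.
    by apply/(proj1 (L_mem n)); apply: phi_Pb.
  - move=> /(proj1 (L_mem n)) /Pb_phi [s [V <-]].
    by apply: map_f; rewrite mem_enum inE; apply/validP.
by rewrite (perm_size P) (proj1 (L_size n)).
Qed.

Theorem theorem3p2 (n : nat) : (1 <= n)%N ->
  c_count n [:: 2; 3; 1] [:: 3; 2; 1] [:: 2; 3; 1] = fibF n /\
  c_count n [:: 3; 1; 2] [:: 3; 2; 1] [:: 3; 1; 2] = fibF n.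
Proof.
move=> _; rewrite /c_count -(count_valid n); split; apply: eq_card => s;
  rewrite !inE; apply/idP/validP => H.
- exact/char1.
- exact/char1.
- exact/char2.
- exact/char2.
Qed.
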